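(* Let $x\in\mathcal H$, $\lambda>0$, $\hat\sigma\ge0$, and let $(y,u,\varepsilon)$ be a $\hat\sigma$-approximate PG solution at $(x,\lambda)$. Define $v:=u+\nabla g(y)$ and $\sigma:=\frac{\lambda L}{\sqrt{1+\lambda\mu}}+\hat\sigma$. Then $v\in\partial_\varepsilon f(y)+\nabla g(y)$ and $\frac{\|\lambda v+y-x\|^2}{1+\lambda\mu}+2\lambda\varepsilon\le\sigma^2\|y-x\|^2$.
   Context: $\mathcal H$ is a finite-dimensional real inner product space with norm $\|\cdot\|$. $f,g:\mathcal H\to(-\infty,\infty]$ are proper, closed, convex; $g$ is $\mu$-strongly convex ($\mu>0$). $\Omega\subseteq\mathcal H$ is a nonempty closed convex set containing $\mathrm{dom}\,f$, $P_\Omega$ is the orthogonal projection onto $\Omega$, and $g$ is differentiable on an open set containing $\Omega$ with $\|\nabla g(x)-\nabla g(y)\|\le L\|x-y\|$ for $x,y\in\Omega$, $L>0$. For $\varepsilon\ge0$, $\partial_\varepsilon f(y):=\{u: f(w)\ge f(y)+\langle u,w-y\rangle-\varepsilon\ \forall w\}$. Definition: for $\hat\sigma\ge0$, $(y,u,\varepsilon)\in\mathcal H\times\mathcal H\times[0,\infty)$ is a $\hat\sigma$-approximate Proximal-Gradient (PG) solution at $(x,\lambda)\in\mathcal H\times(0,\infty)$ if, with $z:=P_\Omega(x)$, $u\in\partial_\varepsilon f(y)$ and $\frac{\|\lambda(u+\nabla g(z))+y-x\|^2}{1+\lambda\mu}+2\lambda\varepsilon\le\hat\sigma^2\|y-x\|^2$.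 *)

(* Defs.v *)
(* The finite-dimensional real inner product space H is modelled as 'rV[R]_n
   with the standard (Euclidean) inner product. *)
From HB Require Import structures.
From mathcomp Require Import all_boot all_order all_algebra.
From mathcomp Require Import all_classical all_reals all_analysis.
Set Implicit Arguments. Unset Strict Implicit. Unset Printing Implicit Defensive.
Import Order.TTheory GRing.Theory Num.Theory.
Import numFieldNormedType.Exports.
Local Open Scope classical_set_scope.
Local Open Scope ring_scope.

Section Defs.
Context {R : realType} {n : nat}.
Local Notation H := 'rV[R]_n.

Definition ip (a b : H) : R := \sum_(i < n) a ord0 i * b ord0 i.
Definition enorm (a : H) : R := Num.sqrt (ip a a).

Definition proper_fun (f : H -> \bar R) : Prop :=
  (forall x, f x != -oo%E) /\ exists x, f x \is a fin_num.

Definition closed_fun (f : H -> \bar R) : Prop :=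
  closed [set p : H * R | (f p.1 <= p.2%:E)%E].

Definition convex_fun (f : H -> \bar R) : Prop :=
  forall (x y : H) (t : R), 0 < t < 1 ->
    (f (t *: x + (1 - t) *: y)%R <= t%:E * f x + (1 - t)%:E * f y)%E.

Definition strongly_convex_fun (mu : R) (f : H -> \bar R) : Prop :=
  forall (x y : H) (t : R), 0 < t < 1 ->
    (f (t *: x + (1 - t) *: y)%R <=
       t%:E * f x + (1 - t)%:E * f y
       - (mu / 2 * t * (1 - t) * enorm (x - y) ^+ 2)%:E)%E.

Definition dom (f : H -> \bar R) : set H := [set x | (f x < +oo)%E].

Definition gradient_on (g : H -> \bar R) (U : set H) (Gr : H -> H) : Prop :=
  forall x, U x -> g x \is a fin_num /\
    forall e : R, 0 < e -> exists2 d : R, 0 < d & forall h : H, enorm h < d ->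
      `| fine (g (x + h)) - fine (g x) - ip (Gr x) h | <= e * enorm h.

Definition is_proj (S : set H) (x p : H) : Prop :=
  S p /\ forall w, S w -> enorm (x - p) <= enorm (x - w).

Definition eps_subdiff (f : H -> \bar R) (eps : R) (y u : H) : Prop :=
  forall w, (f w >= f y + (ip u (w - y)%R - eps)%:E)%E.

(* hat-sigma-approximate PG solution (y,u,eps) at (x,lam), with z := P x,
   where Gr is the gradient of g and mu its strong-convexity modulus *)
Definition approx_PG_sol (f : H -> \bar R) (Gr P : H -> H) (mu sigh : R)
    (x : H) (lam : R) (y u : H) (eps : R) : Prop :=
  0 <= eps /\ eps_subdiff f eps y u /\
  enorm (lam *: (u + Gr (P x)) + y - x) ^+ 2 / (1 + lam * mu) + 2 * lam * eps
    <= sigh ^+ 2 * enorm (y - x) ^+ 2.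

End Defs.

(* Main.v *)
Require Import Defs.
From HB Require Import structures.
From mathcomp Require Import all_boot all_order all_algebra.
From mathcomp Require Import all_classical all_reals all_analysis.
From mathcomp Require Import ring lra.
Import Order.TTheory GRing.Theory Num.Theory.
Import numFieldNormedType.Exports.
Local Open Scope classical_set_scope.
Local Open Scope ring_scope.

Section H.
Context {R : realType} {n : nat}.
Implicit Types a b c : 'rV[R]_n.

Lemma ipC a b : ip a b = ip b a.
Proof. by apply: eq_bigr => i _; rewrite mulrC. Qed.
Lemma ipDl a b c : ip (a + b) c = ip a c + ip b c.
Proof. rewrite /ip -big_split; apply: eq_bigr => i _; by rewrite mxE mulrDl. Qed.
Lemma ipZl k a b : ip (k *: a) b = k * ip a b.
Proof. rewrite /ip mulr_sumr; apply: eq_bigr => i _; by rewrite mxE mulrA. Qed.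
Lemma ipNl a b : ip (- a) b = - ip a b.
Proof. by rewrite -scaleN1r ipZl mulN1r. Qed.
Lemma ipDr a b c : ip c (a + b) = ip c a + ip c b.
Proof. by rewrite ipC ipDl !(ipC c). Qed.
Lemma ipZr k a b : ip b (k *: a) = k * ip b a.
Proof. by rewrite ipC ipZl ipC. Qed.
Lemma ipNr a b : ip b (- a) = - ip b a.
Proof. by rewrite ipC ipNl ipC. Qed.
Lemma ip_ge0 a : 0 <= ip a a.
Proof. by apply: sumr_ge0 => i _; rewrite -expr2 sqr_ge0. Qed.
Lemma enorm_ge0 a : 0 <= enorm a.
Proof. exact: sqrtr_ge0. Qed.
Lemma enorm2 a : enorm a ^+ 2 = ip a a.
Proof. by rewrite /enorm sqr_sqrtr // ip_ge0. Qed.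

Lemma CS a b : ip a b ^+ 2 <= ip a a * ip b b.
Proof.
have H t : 0 <= ip a a - 2 * t * ip a b + t ^+ 2 * ip b b.
  have := ip_ge0 (a + (- t) *: b).
  rewrite !(ipDl, ipDr, ipZl, ipZr) (ipC b a); lra.
have Hb := ip_ge0 b; have Ha := ip_ge0 a.
have [Bp|] := ltP 0 (ip b b).
  have := H (ip a b / ip b b).
  set C := ip a b; set B := ip b b => h.
  have tB : C / B * B = C by rewrite mulfVK ?gt_eqF.
  move: h tB; set t := C / B => h tB.
  have : 0 <= (ip a a - 2 * t * C + t ^+ 2 * B) * B by rewrite mulr_ge0 // ltW.
  rewrite -tB; nra.
move=> Bn; have B0 : ip b b = 0 by apply/eqP; rewrite eq_le Bn Hb.
have [C0|Cn] := eqVneq (ip a b) 0; first by rewrite C0 B0 expr0n /= mulr0.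
have := H ((ip a a + 1) / (2 * ip a b)).
have tC : (ip a a + 1) / (2 * ip a b) * (2 * ip a b) = ip a a + 1.
  by rewrite mulfVK // mulf_neq0 // pnatr_eq0.
move: tC; set t := (_ / _) => tC.
rewrite B0 mulr0 addr0.
lra.
Qed.

Lemma enorm_tri a b : enorm (a + b) <= enorm a + enorm b.
Proof.
rewrite -(ler_pXn2r (_ : 0 < 2)%N) ?nnegrE ?addr_ge0 ?enorm_ge0 //.
rewrite sqrrD !enorm2 ipDl !ipDr (ipC b a).
have : ip a b <= enorm a * enorm b.
  have h := CS a b; rewrite -!enorm2 -exprMn in h.
  have := ler_norm (ip a b).
  have : `|ip a b| <= enorm a * enorm b.
    by rewrite -(ler_pXn2r (_ : 0 < 2)%N) ?nnegrE ?mulr_ge0 ?enorm_ge0 // real_normK ?num_real.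
  lra.
lra.
Qed.
End H.

Lemma enormZ {R : realType} {n : nat} (k : R) (a : 'rV[R]_n) : enorm (k *: a) = `|k| * enorm a.
Proof.
by rewrite /enorm ipZl ipZr mulrA -expr2 sqrtrM ?sqr_ge0 // sqrtr_sqr.
Qed.

Lemma proj_ne {R : realType} {n : nat} (S : set 'rV[R]_n) x p y :
  convex_set S -> is_proj S x p -> S y -> enorm (y - p) <= enorm (y - x).
Proof.
move=> cS [Sp Hp] Sy.
have [d Hd] : exists d, d = x - p by eexists.
have [e He] : exists e, e = y - p by eexists.
have key t : 0 < t < 1 -> 0 <= - 2 * t * ip d e + t ^+ 2 * ip e e.
  case/andP=> t0 t1.
  have Sw : S (t *: y + (1 - t) *: p).
    have := cS y p (Itv01 (ltW t0) (ltW t1)); rewrite !inE /= => /(_ Sy Sp).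
    by rewrite /conv /=.
  have := Hp _ Sw; rewrite -Hd.
  have -> : x - (t *: y + (1 - t) *: p) = d + (- t) *: e.
    by rewrite Hd He; apply/rowP => i; rewrite !mxE; ring.
  rewrite -(ler_pXn2r (_ : 0 < 2)%N) ?nnegrE ?enorm_ge0 // !enorm2.
  rewrite !(ipDl, ipDr, ipZl, ipZr) ?(ipC e d); lra.
have a0 : ip d e <= 0.
  rewrite leNgt; apply/negP => ap.
  have bp := ip_ge0 e.
  have sp : 0 < ip d e + ip d e + ip e e by lra.
  set a := ip d e in ap sp key *; set b := ip e e in bp sp key *.
  have tB : a / (a + a + b) * (a + a + b) = a by rewrite mulfVK ?gt_eqF.
  have t0 : 0 < a / (a + a + b) by rewrite divr_gt0.
  have t1 : a / (a + a + b) < 1 by rewrite ltr_pdivrMr // mul1r; lra.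
  have := key (a / (a + a + b)); rewrite t0 t1 => /(_ isT).
  move: tB t0 t1; set t := a / (a + a + b) => tB t0 t1 h.
  clear key.
  have e1 : t * b = a - 2 * t * a by lra.
  have e2 : t ^+ 2 * b = t * a - 2 * (t * t * a).
    by rewrite expr2 -mulrA e1; ring.
  have h1 : 0 < t * a by rewrite mulr_gt0.
  have h2 : 0 < t * t * a by do 2 apply: mulr_gt0 => //.
  clearbody t a b; clear -h e2 h1 h2; lra.
rewrite -He /enorm ler_sqrt ?ip_ge0 //.
have -> : y - x = e + (-1) *: d by rewrite Hd He; apply/rowP => i; rewrite !mxE; ring.
rewrite !(ipDl, ipDr, ipZl, ipZr) ?(ipC e d).
have := ip_ge0 d; lra.
Qed.

Theorem proposition5p1 (R : realType) (n : nat)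
    (f g : 'rV[R]_n -> \bar R) (mu L : R) (Omega U : set 'rV[R]_n)
    (Gr P : 'rV[R]_n -> 'rV[R]_n) :
  proper_fun f -> closed_fun f -> convex_fun f ->
  proper_fun g -> closed_fun g -> convex_fun g ->
  0 < mu -> strongly_convex_fun mu g ->
  Omega !=set0 -> closed Omega -> convex_set Omega ->
  dom f `<=` Omega ->
  (forall x, is_proj Omega x (P x)) ->
  open U -> Omega `<=` U -> gradient_on g U Gr ->
  0 < L -> (forall x y, Omega x -> Omega y -> enorm (Gr x - Gr y) <= L * enorm (x - y)) ->
  forall (x : 'rV[R]_n) (lam sigh : R) (y u : 'rV[R]_n) (eps : R),
    0 < lam -> 0 <= sigh ->
    approx_PG_sol f Gr P mu sigh x lam y u eps ->
    let v := u + Gr y in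
    let sigma := lam * L / Num.sqrt (1 + lam * mu) + sigh in
    (exists2 w, eps_subdiff f eps y w & v = w + Gr y) /\
    enorm (lam *: v + y - x) ^+ 2 / (1 + lam * mu) + 2 * lam * eps
      <= sigma ^+ 2 * enorm (y - x) ^+ 2.
Proof.
move=> pf _ _ _ _ _ mu0 _ _ _ cO domO Pp _ _ _ L0 Lip x lam sigh y u eps lam0 sh0
  [eps0 [sub Happ]] v sigma.
split; first by exists u.
have Oy : Omega y.
  apply: domO; rewrite /dom /=.
  case: pf => nmo [x0 fx0].
  have := sub x0; case E: (f y) => [r| |] /=.
  - move=> _; exact: ltry.
  - move=> h; move: fx0; rewrite leye_eq in h; by rewrite (eqP h).
  - by move: (nmo y); rewrite E.
have Hz := @proj_ne _ _ Omega x (P x) y cO (Pp x) Oy.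
have Hl := Lip y (P x) Oy (Pp x).1.
set z := P x in Hz Hl Happ *.
set w := lam *: (u + Gr z) + y - x.
have -> : lam *: v + y - x = w + lam *: (Gr y - Gr z).
  by rewrite /w /v; apply/rowP => i; rewrite !mxE; ring.
set N := enorm _.
set A := enorm w in Happ *.
set D := enorm (y - x) in Hz Happ *.
have HN : N <= A + lam * L * D.
  have t1 := enorm_tri w (lam *: (Gr y - Gr z)).
  rewrite enormZ (ger0_norm (ltW lam0)) in t1.
  have t2 : lam * enorm (Gr y - Gr z) <= lam * (L * D).
    rewrite ler_pM2l //; apply: le_trans Hl _; by rewrite ler_pM2l.
  rewrite /N; apply: (le_trans t1); rewrite /A -mulrA lerD2l; exact: t2.
have s0 : 0 < Num.sqrt (1 + lam * mu) by rewrite sqrtr_gt0; nra.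
have s2 : 1 + lam * mu = Num.sqrt (1 + lam * mu) ^+ 2 by rewrite sqr_sqrtr //; nra.
rewrite /sigma.
move: s0 s2 Happ HN; set s := Num.sqrt _ => s0 s2 Happ HN.
rewrite s2 in Happ *.
have A0 : 0 <= A by exact: enorm_ge0.
have N0 : 0 <= N by exact: enorm_ge0.
have D0 : 0 <= D by exact: enorm_ge0.
rewrite -expr_div_n in Happ *.
have -> : (lam * L / s + sigh) ^+ 2 * D ^+ 2 = (lam * L * D / s + sigh * D) ^+ 2.
  by rewrite -exprMn mulrDl mulrAC.
have HN' : N / s <= A / s + lam * L * D / s.
  by rewrite -mulrDl ler_pM2r ?invr_gt0.
have a0 : 0 <= A / s := divr_ge0 A0 (ltW s0).
have n0 : 0 <= N / s := divr_ge0 N0 (ltW s0).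
have m0 : 0 <= lam * L * D / s := divr_ge0 (mulr_ge0 (mulr_ge0 (ltW lam0) (ltW L0)) D0) (ltW s0).
have k0 : 0 <= sigh * D := mulr_ge0 sh0 D0.
have le0 : 0 <= 2 * lam * eps := mulr_ge0 (mulr_ge0 (ler0n R 2) (ltW lam0)) eps0.
rewrite -expr_div_n.
move: Happ HN' a0 n0 m0 k0 le0 eps0.
rewrite -exprMn.
move: (A / s) (N / s) (lam * L * D / s) (sigh * D) (2 * lam * eps) => a nq m k e.
move=> H1 H2 a0 n0 m0 k0 e0 _.
have ak : a <= k.
  by rewrite -(ler_pXn2r (_ : 0 < 2)%N) ?nnegrE //; lra.
nra.
Qed.
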